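(* Fix $d\in\mathbb N$ and $1\le k\le d-1$. Let $S_\star$ be drawn uniformly from the $k$-element subsets of $[d]$. Given $S_\star$, draw $m$ i.i.d. samples $(x^{(i)},z^{(i)})$, $i=1,\dots,m$, where $x^{(i)}$ is uniform on $\{0,1\}^d$, $\pi^{(i)}$ is a uniformly random bijection $[k]\to S_\star$ (independent across $i$), and $z^{(i)}=(z^{(i)}_1,\dots,z^{(i)}_k)$ with $z^{(i)}_t=\bigoplus_{s=1}^t x^{(i)}_{\pi^{(i)}(s)}$. Then for any (possibly randomized) estimator $\hat S$ of $S_\star$ from the samples, achieving $\Pr[\hat S=S_\star]\ge1-\delta$ (probability over $S_\star$, the samples and the estimator) requires $$m\ge\frac{(1-\delta)\log\binom dk-1}{\log(k+1)}.$$ Moreover, for $k\le d/2$, this gives $m\ge\frac{(1-\delta)k\log(d/k)-1}{\log(k+1)}$. *)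

(* Defs.v *)
From HB Require Import structures.
From mathcomp Require Import all_boot all_order all_algebra.
From mathcomp Require Import all_classical all_reals.
From mathcomp Require Import exp.

Set Implicit Arguments.
Unset Strict Implicit.
Unset Printing Implicit Defensive.

Import Order.TTheory GRing.Theory Num.Theory.
Local Open Scope ring_scope.

Definition log2 {R : realType} (x : R) : R := ln x / ln 2.

(* the k labels z_1..z_k (0-indexed: label t : 'I_k is z_{t+1}) *)
Definition zof (d k : nat) (x : {ffun 'I_d -> bool}) (pi : {ffun 'I_k -> 'I_d})
  : {ffun 'I_k -> bool} :=
  [ffun t : 'I_k => \big[addb/false]_(s < k | (nat_of_ord s <= nat_of_ord t)%N) x (pi s)].

Definition bijs_onto (d k : nat) (S : {set 'I_d}) : {set {ffun 'I_k -> 'I_d}} :=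
  [set pi : {ffun 'I_k -> 'I_d} | injectiveb pi && (pi @: [set: 'I_k] == S)].

Definition sample (d k : nat) : finType :=
  ({ffun 'I_d -> bool} * {ffun 'I_k -> bool})%type.

(* probability of a single sample (x, z) given S_star = S:
   x uniform on {0,1}^d, pi uniform among bijections [k] -> S *)
Definition p_sample {R : realType} (d k : nat) (S : {set 'I_d}) (xz : sample d k) : R :=
  (2 ^+ d)^-1 *
  (#|[set pi in bijs_onto k S | zof xz.1 pi == xz.2]|%:R / #|bijs_onto k S|%:R).

Definition p_samples {R : realType} (d k m : nat) (S : {set 'I_d})
  (y : {ffun 'I_m -> sample d k}) : R :=
  \prod_(i < m) p_sample S (y i).

Definition ksubsets (d k : nat) : {set {set 'I_d}} := [set S : {set 'I_d} | #|S| == k].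

(* a (possibly randomized) estimator: a Markov kernel from samples to subsets *)
Definition is_estimator {R : realType} (d k m : nat)
  (est : {ffun 'I_m -> sample d k} -> {set 'I_d} -> R) : Prop :=
  forall y, (forall S, 0 <= est y S) /\ \sum_(S : {set 'I_d}) est y S = 1.

Definition success_prob {R : realType} (d k m : nat)
  (est : {ffun 'I_m -> sample d k} -> {set 'I_d} -> R) : R :=
  \sum_(S in ksubsets d k) (#|ksubsets d k|%:R)^-1 *
    \sum_(y : {ffun 'I_m -> sample d k}) p_samples S y * est y S.

(* Main.v *)
Require Import Defs.
From HB Require Import structures.
From mathcomp Require Import all_boot all_order all_algebra.
From mathcomp Require Import all_classical all_reals.
From mathcomp Require Import exp.
Import Order.TTheory GRing.Theory Num.Theory.
Local Open Scope ring_scope.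

From mathcomp Require Import zify ring lra perm.
Set Implicit Arguments.
Unset Strict Implicit.



Definition wt k (c : {ffun 'I_k -> bool}) : nat := count c (enum 'I_k).

Lemma count_bool (a : pred bool) (s : seq bool) :
  count a s = ((if a true then count id s else 0) + (if a false then count negb s else 0))%N.
Proof.
elim: s => [|b s IH] /=; first by case: (a true); case: (a false).
rewrite IH; case: b; case: (a true); case: (a false) => /=; rewrite ?addnS ?addSn ?add0n ?addn0 //.
Qed.

Lemma perm_exists k (c c' : {ffun 'I_k -> bool}) : wt c = wt c' ->
  exists s : {perm 'I_k}, forall i, c' i = c (s i).
Proof.
move=> Hw.
have E1 : forall f : {ffun 'I_k -> bool}, count id [seq f i | i <- enum 'I_k] = wt f.
  by move=> f; rewrite count_map.
have E2 : forall f : {ffun 'I_k -> bool}, count negb [seq f i | i <- enum 'I_k] = (k - wt f)%N.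
  move=> f; have H := count_predC id [seq f i | i <- enum 'I_k].
  rewrite size_map size_enum_ord E1 in H; by rewrite -[X in (X - _)%N]H addKn.
pose t := [tuple c i | i < k].
have Ht : val t = [seq c i | i <- enum 'I_k] by [].
have Hp : perm_eq [seq c' i | i <- enum 'I_k] t.
  rewrite /t; apply/seq.permP => a; rewrite Ht !(count_bool a) E1 E1 E2 E2 Hw //.
case/tuple_permP: Hp => p Ep; exists p => i.
have := congr1 (fun s => nth false s i) Ep.
rewrite /= (nth_map i) ?size_enum_ord // nth_ord_enum => ->.
rewrite (nth_map i) ?size_enum_ord // nth_ord_enum.
by rewrite tnth_mktuple.
Qed.



Section Count.
Variables (d k : nat) (x : {ffun 'I_d -> bool}) (S : {set 'I_d}).

Definition cmap (pi : {ffun 'I_k -> 'I_d}) : {ffun 'I_k -> bool} := [ffun i => x (pi i)].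
Definition NS (c : {ffun 'I_k -> bool}) : nat :=
  #|[set pi in bijs_onto k S | cmap pi == c]|.

Lemma NS_perm (s : {perm 'I_k}) c : (NS c <= NS [ffun i => c (s i)])%N.
Proof.
pose phi (pi : {ffun 'I_k -> 'I_d}) : {ffun 'I_k -> 'I_d} := [ffun i => pi (s i)].
have phi_inj : injective phi.
  move=> p q E; apply/ffunP => j.
  have := congr1 (fun f : {ffun 'I_k -> 'I_d} => f (s^-1 j)%g) E.
  by rewrite /phi !ffunE permKV.
rewrite /NS -(card_imset _ phi_inj); apply: subset_leq_card.

apply/fintype.subsetP => q /imsetP [p]; rewrite inE => /andP [Hp /eqP Hc] ->.
rewrite inE; apply/andP; split.
  move: Hp; rewrite /bijs_onto !inE => /andP [/injectiveP Hi /eqP Him].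
  apply/andP; split.
    by apply/injectiveP => i j; rewrite /phi !ffunE => /Hi /perm_inj.
  rewrite -Him; apply/eqP/setP => y; apply/imsetP/imsetP => [[i _ ->]|[j _ ->]].
    by exists (s i) => //; rewrite /phi ffunE.
  by exists (s^-1 j)%g => //; rewrite /phi ffunE permKV.
apply/eqP/ffunP => i; rewrite /cmap /phi !ffunE -Hc /cmap ffunE //.
Qed.

Lemma NS_eq c c' : wt c = wt c' -> NS c = NS c'.
Proof.
move=> Hw; apply/eqP; rewrite eqn_leq; apply/andP; split.
  have [s Hs] := perm_exists Hw.
  have -> : c' = [ffun i => c (s i)] by apply/ffunP => i; rewrite ffunE.
  exact: NS_perm.
have [s Hs] := perm_exists (esym Hw).
have -> : c = [ffun i => c' (s i)] by apply/ffunP => i; rewrite ffunE.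
exact: NS_perm.
Qed.

Lemma card_partition_fun (T : finType) (B : {set {ffun 'I_k -> 'I_d}}) (f : {ffun 'I_k -> 'I_d} -> T) :
  (\sum_(t : T) #|[set pi in B | f pi == t]| = #|B|)%N.
Proof.
rewrite -sum1_card (partition_big f xpredT) //=.
apply: eq_bigr => t _; rewrite -sum1_card; apply: eq_bigl => pi; rewrite inE.
by [].
Qed.

Lemma NS_bound c : (NS c * #|[set c' : {ffun 'I_k -> bool} | wt c' == wt c]| <= #|bijs_onto k S|)%N.
Proof.
rewrite mulnC -sum_nat_const.
rewrite (eq_bigr (fun c' => NS c')); last first.
  by move=> c'; rewrite inE => /eqP H; rewrite (NS_eq H).
rewrite -(card_partition_fun (bijs_onto k S) cmap).
rewrite [X in (_ <= X)%N](bigID (mem [set c' : {ffun 'I_k -> bool} | wt c' == wt c])) /=.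
exact: leq_addr.
Qed.

End Count.



Definition Pz k (c : {ffun 'I_k -> bool}) : {ffun 'I_k -> bool} :=
  [ffun t : 'I_k => \big[addb/false]_(s < k | (nat_of_ord s <= nat_of_ord t)%N) c s].

Lemma zof_cmap d k (x : {ffun 'I_d -> bool}) (pi : {ffun 'I_k -> 'I_d}) :
  zof x pi = Pz (cmap x pi).
Proof. by apply/ffunP => t; rewrite !ffunE; apply: eq_bigr => s _; rewrite ffunE. Qed.

Definition Cw k (c : {ffun 'I_k -> bool}) := [set c' : {ffun 'I_k -> bool} | wt c' == wt c].

Definition hz {R : realType} k (z : {ffun 'I_k -> bool}) : R :=
  \sum_(c | Pz c == z) (#|Cw c|%:R)^-1.

Lemma card_zof d k (x : {ffun 'I_d -> bool}) (S : {set 'I_d}) z :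
  #|[set pi in bijs_onto k S | zof x pi == z]| = (\sum_(c | Pz c == z) NS x S c)%N.
Proof.
rewrite -sum1_card (partition_big (cmap x) (fun c => Pz c == z)); last first.
  by move=> pi; rewrite inE zof_cmap => /andP [].
apply: eq_bigr => c /eqP Hc; rewrite /NS -sum1_card; apply: eq_bigl => pi.
rewrite !inE zof_cmap; case E: (cmap x pi == c); rewrite ?andbF ?andbT //.
by rewrite (eqP E) Hc eqxx andbT.
Qed.

Lemma p_sample_ge0 {R : realType} d k (S : {set 'I_d}) (s : sample d k) : 0 <= p_sample (R:=R) S s.
Proof. by rewrite /p_sample mulr_ge0 ?invr_ge0 ?exprn_ge0 ?divr_ge0. Qed.

Lemma p_sample_le {R : realType} d k (S : {set 'I_d}) (s : sample d k) :
  p_sample (R:=R) S s <= (2 ^+ d)^-1 * hz s.2.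
Proof.
case: s => x z; rewrite /p_sample /=; apply: ler_wpM2l; first by rewrite invr_ge0 exprn_ge0.
rewrite card_zof natr_sum mulr_suml /hz; apply: ler_sum => c _.
have HB := NS_bound x S c.
have HC : (0 < #|Cw c|)%N by apply/card_gt0P; exists c; rewrite inE.
case: (posnP #|bijs_onto k S|) => Hn.
  rewrite Hn in HB; move: HB; rewrite leqn0 muln_eq0 => /orP [/eqP ->|/eqP H]; last by rewrite H in HC.
  by rewrite mul0r invr_ge0.
rewrite ler_pdivrMr ?ltr0n // mulrC ler_pdivlMr ?ltr0n //.
by rewrite -natrM ler_nat /Cw.
Qed.

Lemma wt_lt k (c : {ffun 'I_k -> bool}) : (wt c < k.+1)%N.
Proof. by rewrite ltnS /wt -[X in (_ <= X)%N](size_enum_ord k) count_size. Qed.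

Lemma sum_hz {R : realType} k : \sum_(z : {ffun 'I_k -> bool}) hz (R:=R) z <= k.+1%:R.
Proof.
rewrite /hz (_ : \sum_z _ = \sum_(c : {ffun 'I_k -> bool}) (#|Cw c|%:R : R)^-1); last first.
  by rewrite [RHS](partition_big (@Pz k) xpredT).
pose wo (c : {ffun 'I_k -> bool}) : 'I_k.+1 := Ordinal (wt_lt c).
rewrite (partition_big wo xpredT) //=.
apply: (@le_trans _ _ (\sum_(w : 'I_k.+1) (1:R))); last by rewrite sumr_const card_ord.
apply: ler_sum => w _.
rewrite (eq_bigr (fun _ => (#|[set c' : {ffun 'I_k -> bool} | wt c' == w]|%:R : R)^-1)); last first.
  by move=> c /eqP <-.
rewrite (eq_bigl (mem [set c' : {ffun 'I_k -> bool} | wt c' == w])); last first.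
  by move=> c; rewrite !inE.
rewrite sumr_const -[_^-1 *+ _]mulr_natr.
case: (posnP #|[set c' : {ffun 'I_k -> bool} | wt c' == w]|) => H.
  by rewrite H mulr0 ler01.
by rewrite mulVf // pnatr_eq0 -lt0n.
Qed.



Lemma card_X d : #|{ffun 'I_d -> bool}| = (2 ^ d)%N.
Proof. by rewrite card_ffun card_bool card_ord. Qed.

Lemma sum_sample {R : realType} d k (F : {ffun 'I_d -> bool} -> {ffun 'I_k -> bool} -> R) :
  \sum_(s : sample d k) F s.1 s.2 = \sum_x \sum_z F x z.
Proof. by rewrite pair_big. Qed.

Lemma sum_H {R : realType} d k :
  \sum_(s : sample d k) (2 ^+ d)^-1 * hz (R:=R) s.2 <= k.+1%:R.
Proof.
rewrite (sum_sample (fun x z => (2 ^+ d)^-1 * hz (R:=R) z)).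
apply: (@le_trans _ _ (\sum_(x : {ffun 'I_d -> bool}) (2 ^+ d)^-1 * k.+1%:R)).
  apply: ler_sum => x _; rewrite -mulr_sumr; apply: ler_wpM2l; last exact: sum_hz.
  by rewrite invr_ge0 exprn_ge0.
rewrite sumr_const card_X -[_ *+ _]mulr_natl natrX mulrA mulfV ?mul1r //.
by rewrite expf_neq0 // pnatr_eq0.
Qed.

Lemma sum_p_sample {R : realType} d k (S : {set 'I_d}) :
  \sum_(s : sample d k) p_sample (R:=R) S s <= 1.
Proof.
rewrite (sum_sample (fun x z => p_sample (R:=R) S (x, z))).
apply: (@le_trans _ _ (\sum_(x : {ffun 'I_d -> bool}) (2 ^+ d)^-1)).
  apply: ler_sum => x _; rewrite /p_sample /= -mulr_sumr; rewrite -[X in _ <= X]mulr1.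
  apply: ler_wpM2l; first by rewrite invr_ge0 exprn_ge0.
  rewrite -mulr_suml -natr_sum card_partition_fun.
  case: (posnP #|bijs_onto k S|) => H; first by rewrite H mul0r ler01.
  by rewrite mulfV // pnatr_eq0 -lt0n.
rewrite sumr_const card_X -[_ *+ _]mulr_natl natrX mulfV //.
by rewrite expf_neq0 // pnatr_eq0.
Qed.



Lemma ln2_ge {R : realType} : 1/2 <= ln (2 : R).
Proof.
have H := @le_ln1Dx R (- (1/2)).
have H1 : (1 + - (1/2) : R) = 2^-1 by field.
rewrite H1 lnV ?posrE // in H.
have : -1 < - (1/2 : R) by lra.
move/H; lra.
Qed.

Lemma xlnx_ge {R : realType} (a : R) : 0 < a -> - (a * ln a) <= ln 2.
Proof.
move=> a0.
set b := Num.sqrt a.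
have b0 : 0 < b by rewrite sqrtr_gt0.
have ab : a = b * b by rewrite -expr2 sqr_sqrtr // ltW.
have lna : ln a = ln b + ln b by rewrite ab lnM ?posrE.
have H := @le_ln1Dx R (b^-1 - 1).
have H1 : (1 + (b^-1 - 1)) = b^-1 by ring.
rewrite H1 lnV ?posrE // in H.
have bi : b * b^-1 = 1 by rewrite mulfV // gt_eqF.
have bi0 : 0 < b^-1 by rewrite invr_gt0.
have := H ltac:(lra).
have := @ln2_ge R.
rewrite lna ab.
move: (ln b) (b^-1) bi bi0 => u v bi bi0 h1 h2.
have h5 : b * (- u) <= b * (v - 1) by rewrite ler_pM2l.
have h6 : 2 * b * (b * (- u)) <= 2 * b * (1 - b).
  apply: ler_wpM2l; first by rewrite mulr_ge0 // ltW.
  by move: h5; rewrite mulrBr bi mulr1.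
have h7 : 0 <= (2 * b - 1) ^+ 2 by rewrite sqr_ge0.
rewrite expr2 in h7.
have E : - (b * b * (u + u)) = 2 * b * (b * (- u)) by ring.
rewrite E; nra.
Qed.

Lemma fano_real {R : realType} (a N Q : R) :
  1 <= N -> 1 <= Q -> a <= 1 -> a * N <= Q -> a * ln N <= ln Q + ln 2.
Proof.
move=> N1 Q1 a1 aNQ.
have lnN : 0 <= ln N by apply: ln_ge0.
have lnQ : 0 <= ln Q by apply: ln_ge0.
have ln2 : 0 < ln (2 : R) by apply: ln_gt0; lra.
case: (lerP a 0) => a0.
  have : a * ln N <= 0 by rewrite mulr_le0_ge0.
  lra.
have H : ln a + ln N <= ln Q.
  rewrite -lnM ?posrE ?(lt_le_trans _ N1) //.
  by rewrite ler_ln ?posrE ?mulr_gt0 ?(lt_le_trans _ N1) ?(lt_le_trans _ Q1).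
have := xlnx_ge a0.
have h3 : a * ln Q <= ln Q by rewrite ler_piMl.
have h4 : a * ln N <= a * (ln Q - ln a) by rewrite ler_pM2l //; lra.
lra.
Qed.



Lemma binom_lb {R : realType} k : forall d, (k <= d)%N ->
  ((d%:R : R) / k%:R) ^+ k <= 'C(d, k)%:R.
Proof.
elim: k => [|k IH] d Hkd; first by rewrite expr0 bin0.
case: d Hkd => [//|d] Hkd; rewrite ltnS in Hkd.
set r : R := d.+1%:R / k.+1%:R.
have r0 : 0 <= r by rewrite divr_ge0.
have E : ('C(d.+1, k.+1)%:R : R) = r * 'C(d, k)%:R.
  apply: (mulfI (_ : k.+1%:R != 0 :> R)); first by rewrite pnatr_eq0.
  rewrite -natrM -mul_bin_diag natrM /r /=; field.
  by rewrite addrC natr1 pnatr_eq0.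
rewrite E exprS; apply: ler_wpM2l => //.
apply: le_trans (IH d Hkd).
case: (posnP k) => [->|k0]; first by rewrite !expr0.
apply: lerXn2r; rewrite ?nnegrE ?divr_ge0 //.
rewrite /r ler_pdivrMr ?ltr0n // mulrAC ler_pdivlMr ?ltr0n //.
rewrite -!natrM ler_nat; nia.
Qed.

Lemma est_le1 {R : realType} d k m (est : {ffun 'I_m -> sample d k} -> {set 'I_d} -> R) :
  is_estimator est -> forall y S, est y S <= 1.
Proof.
move=> He y S; have [H0 H1] := He y.
rewrite -H1 (bigD1 S) //= lerDl sumr_ge0 //.
Qed.

Lemma success_le1 {R : realType} d k m (est : {ffun 'I_m -> sample d k} -> {set 'I_d} -> R) :
  is_estimator est -> success_prob est <= 1.
Proof.
move=> He.
rewrite /success_prob -mulr_sumr.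
apply: (@le_trans _ _ ((#|ksubsets d k|%:R)^-1 * \sum_(S in ksubsets d k) (1:R))).
  apply: ler_wpM2l; first by rewrite invr_ge0.
  apply: ler_sum => S _.
  apply: (@le_trans _ _ (\sum_(y : {ffun 'I_m -> sample d k}) p_samples (R:=R) S y)).
    apply: ler_sum => y _; rewrite -[X in _ <= X]mulr1; apply: ler_wpM2l.
      by rewrite /p_samples prodr_ge0 // => i _; apply: p_sample_ge0.
    exact: est_le1.
  rewrite /p_samples -(bigA_distr_bigA (fun (i : 'I_m) (s : sample d k) => p_sample (R:=R) S s)).
  apply: (@le_trans _ _ (\prod_(i < m) (1:R))); last by rewrite prodr_const expr1n.
  apply: ler_prod => i _; apply/andP; split; last exact: sum_p_sample.
  by apply: sumr_ge0 => s _; apply: p_sample_ge0.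
rewrite sumr_const -[_ *+ _]mulr_natl.
case: (posnP #|ksubsets d k|) => H; first by rewrite H /= mul0r invr0 mulr0.
by rewrite mulr1 mulVf // pnatr_eq0 -lt0n.
Qed.

Lemma success_le {R : realType} d k m (est : {ffun 'I_m -> sample d k} -> {set 'I_d} -> R) :
  is_estimator est ->
  success_prob est <= (#|ksubsets d k|%:R)^-1 * (k.+1%:R) ^+ m.
Proof.
move=> He.
rewrite /success_prob -mulr_sumr; apply: ler_wpM2l; first by rewrite invr_ge0.
pose G (y : {ffun 'I_m -> sample d k}) : R := \prod_(i < m) ((2 ^+ d)^-1 * hz (R:=R) (y i).2).
have G0 : forall y, 0 <= G y.
  move=> y; apply: prodr_ge0 => i _; apply: mulr_ge0; first by rewrite invr_ge0 exprn_ge0.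
  by apply: sumr_ge0 => c _; rewrite invr_ge0.
apply: (@le_trans _ _ (\sum_(S in ksubsets d k) \sum_y G y * est y S)).
  apply: ler_sum => S _; apply: ler_sum => y _; apply: ler_wpM2r; first by case: (He y).
  apply: ler_prod => i _; apply/andP; split; first exact: p_sample_ge0.
  exact: p_sample_le.
rewrite exchange_big /=.
apply: (@le_trans _ _ (\sum_y G y)).
  apply: ler_sum => y _; rewrite -mulr_sumr -[X in _ <= X]mulr1; apply: ler_wpM2l => //.
  have [H0 H1] := He y; rewrite -H1.
  rewrite [X in _ <= X](bigID (mem (ksubsets d k))) /= lerDl sumr_ge0 //.
rewrite /G -(bigA_distr_bigA (fun (i : 'I_m) (s : sample d k) => (2 ^+ d)^-1 * hz (R:=R) s.2)).
apply: (@le_trans _ _ (\prod_(i < m) (k.+1%:R : R))); last by rewrite prodr_const card_ord.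
apply: ler_prod => i _; apply/andP; split; last exact: sum_H.
apply: sumr_ge0 => s _; apply: mulr_ge0; first by rewrite invr_ge0 exprn_ge0.
by apply: sumr_ge0 => c _; rewrite invr_ge0.
Qed.

Unset Implicit Arguments.
Set Strict Implicit.


Lemma div_helper {R : realType} (A l2 lk M : R) : 0 < l2 -> 0 < lk ->
  A - l2 <= M * lk -> (A / l2 - 1) / (lk / l2) <= M.
Proof.
move=> l20 lk0 H.
rewrite ler_pdivrMr ?divr_gt0 //.
have E : A / l2 - 1 = (A - l2) / l2 by field; rewrite gt_eqF.
rewrite E mulrA ler_pM2r ?invr_gt0 //.
Qed.

Theorem theorem11p2 (R : realType) (d k m : nat) (delta : R)
  (est : {ffun 'I_m -> sample d k} -> {set 'I_d} -> R) :
  (1 <= k)%N -> (k <= d.-1)%N ->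
  is_estimator est ->
  1 - delta <= success_prob est ->
  ((1 - delta) * log2 ('C(d, k)%:R) - 1) / log2 (k.+1%:R) <= m%:R
  /\ ((2 * k <= d)%N ->
      ((1 - delta) * (k%:R * log2 (d%:R / k%:R)) - 1) / log2 (k.+1%:R) <= m%:R).
Proof.
move=> k1 kd He Hs.
have kd' : (k <= d)%N by apply: leq_trans kd (leq_pred d).
have cardK : #|ksubsets d k| = 'C(d, k) by rewrite /ksubsets card_draws card_ord.
have N1 : 1 <= ('C(d, k)%:R : R) by rewrite ler1n bin_gt0.
have Q1 : 1 <= (k.+1%:R : R) ^+ m by rewrite exprn_ege1 // ler1n.
have a1 : 1 - delta <= 1 := le_trans Hs (success_le1 He).
have aNQ : (1 - delta) * 'C(d, k)%:R <= (k.+1%:R : R) ^+ m.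
  rewrite -ler_pdivlMr ?(lt_le_trans _ N1) // mulrC.
  by rewrite -cardK; apply: le_trans Hs (success_le He).
have Fa := fano_real N1 Q1 a1 aNQ.
have l20 : 0 < ln (2 : R) by apply: ln_gt0; rewrite ltr1n.
have lk0 : 0 < ln (k.+1%:R : R) by apply: ln_gt0; rewrite ltr1n ltnS.
have lnQ : ln ((k.+1%:R : R) ^+ m) = m%:R * ln (k.+1%:R) by rewrite lnXn ?ltr0n // mulr_natl.
have P1 : ((1 - delta) * log2 ('C(d, k)%:R) - 1) / log2 (k.+1%:R) <= (m%:R : R).
  rewrite /log2 mulrA; apply: div_helper => //; rewrite -lnQ; lra.
split => // H2k.
set a := 1 - delta in P1 *.
have k0 : (0 : R) < k%:R by rewrite ltr0n.
have dk0 : (0 : R) < d%:R / k%:R.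
  by apply: divr_gt0 => //; rewrite ltr0n; exact: leq_trans k1 kd'.
have dk1 : (1 : R) <= d%:R / k%:R by rewrite ler_pdivlMr // mul1r ler_nat.
have X0 : 0 <= k%:R * log2 (d%:R / k%:R :> R).
  apply: mulr_ge0; first exact: ler0n.
  by apply: divr_ge0; [exact: ln_ge0 | exact: ltW].
have p0 : 0 < log2 (k.+1%:R : R) by rewrite /log2 divr_gt0.
case: (lerP a 0) => a0.
  apply: le_trans (ler0n _ m).
  rewrite mulr_le0_ge0 ?invr_ge0 ?ltW //.
  have : a * (k%:R * log2 (d%:R / k%:R)) <= 0 by rewrite mulr_le0_ge0.
  lra.
apply: le_trans P1; apply: ler_wpM2r; first by rewrite invr_ge0 ltW.
rewrite lerD2r; apply: ler_wpM2l; first exact: ltW.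
rewrite /log2 mulrA ler_pM2r ?invr_gt0 //.
rewrite mulr_natl -lnXn // ler_ln ?posrE ?exprn_gt0 ?(lt_le_trans _ N1) //.
exact: binom_lb.
Qed.
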